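(* Let $G$ be an execution graph satisfying $\mathit{BE}(G)$, $T$ a thread, $q$ an iteration index with $\mathit{WI}_G^T(q)$, and $m\le\mathit{len}_G^T(q)$. Write $a=\mathit{start}_G^T(q)+m$ and $b=\mathit{start}_G^T(q+1)+m$. Then: (1) $e_G^T(a)=e_G^T(b)$; (2) $v_G^T(a)=v_G^T(b)$; (3) $k_G^T(a)=k_G^T(b)$; (4) for every register $r$ with $\sigma_G^T(a)(r)\neq\sigma_G^T(b)(r)$ there is $u\in[\mathit{start}_G^T(q):\mathit{end}_G^T(q)]$ with $r\in\mathit{vis}_G^T(u,b)$.
   Context: Programs. There are finite sets $\mathit{Register}$, $\mathit{Value}$, $\mathit{Location}$; $\mathit{State}=\mathit{Register}\to\mathit{Value}$; an update is a partial map $\mathit{Register}\rightharpoonup\mathit{Value}$, and $(\sigma\ll\mu)(r)=\mu(r)$ if $r\in\mathrm{Dom}(\mu)$, else $\sigma(r)$. Events are reads $R^m(x)$, writes $W^m(x,v)$, fences $F^m$, error $E$. A program consists of finitely many threads $T$, each with a finite statement sequence $P_T(0),\dots,P_T(|P_T|-1)$. A statement is $\mathtt{step}(\epsilon,\delta)$ with $\epsilon:\mathit{State}\to\mathit{Event}$, $\delta:\mathit{State}\times(\mathit{Value}\cup\{\bot\})\to\mathit{Update}$, or $\mathtt{await}(n,\kappa)$ with $n\in\mathbb N$, $\kappa:\mathit{State}\to\{0,1\}$. Syntactic restriction: if $P_T(k)=\mathtt{await}(n,\cdot)$ then $n\le k$ and no $P_T(k')$ with $k'\in[k-n:k)$ is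 an await. ($[a:b)=\{a,\dots,b-1\}$, $[a:b]=\{a,\dots,b\}$.) An execution graph $G$ has a set $G.\mathrm E$ of triples $\langle T,t,e\rangle$ and a partial reads-from map $G.\mathrm{rf}$ from reads to writes. Thread-local semantics: $k_G^T(0)=0$, $\sigma_G^T(0)$ fixed; if $k_G^T(t)\ge|P_T|$ or no triple $\langle T,t,\cdot\rangle$ is in $G.\mathrm E$, execution stops ($N_G^T=t$). Otherwise with $S=P_T(k_G^T(t))$: $e_G^T(t)=\epsilon(\sigma_G^T(t))$ for $S=\mathtt{step}(\epsilon,\cdot)$, $F^{\mathrm{rlx}}$ for an await; $v_G^T(t)$ is the value of the write that $G.\mathrm{rf}$ assigns to $\langle T,t,e_G^T(t)\rangle$ if this is a read with defined rf, else $\bot$. For a step: $k_G^T(t+1)=k_G^T(t)+1$; if $e_G^T(t)$ is a read with $v_G^T(t)=\bot$ then $N_G^T=t+1$, $\sigma_G^T(t+1)=\sigma_G^T(t)$, else $\sigma_G^T(t+1)=\sigma_G^T(t)\ll\delta(\sigma_G^T(t),v_G^T(t))$. For $\mathtt{await}(n,\kappa)$: $\sigma_G^T(t+1)=\sigma_G^T(t)$ and $k_G^T(t+1)=k_G^T(t)+1$ if $\kappa(\sigma_G^T(t))=0$, else $k_G^T(t)-n$. Awaits: $\mathit{end}_G^T(0)<\mathit{end}_G^T(1)<\cdots$ enumerate the steps $t$ at which $P_T(k_G^T(t))$ is an await; $\mathit{len}_G^T(q)=n$ where $P_T(k_G^T(\mathit{end}_G^T(q)))=\mathtt{await}(n,\kappa)$;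 $\mathit{start}_G^T(q)=\mathit{end}_G^T(q)-\mathit{len}_G^T(q)$; $\mathit{fail}_G^T(q)$ iff $\kappa(\sigma_G^T(\mathit{end}_G^T(q)))=1$. $\mathit{WI}_G^T(q)$ holds iff $\mathit{fail}_G^T(q)$ and for every $m\le\mathit{len}_G^T(q)$ such that $e_G^T(\mathit{start}_G^T(q)+m)$ is a read, the events of steps $\mathit{start}_G^T(q)+m$ and $\mathit{start}_G^T(q+1)+m$ of $T$ are mapped by $G.\mathrm{rf}$ to the same write. Bounded effect. $\delta_G^T(t)=\delta(\sigma_G^T(t),v_G^T(t))$ if $P_T(k_G^T(t))=\mathtt{step}(\cdot,\delta)$ and not ($e_G^T(t)$ is a read and $v_G^T(t)=\bot$); otherwise the empty update. $\mathit{vis}_G^T(t,u)=\mathrm{Dom}(\delta_G^T(t))\setminus\bigcup_{t<u'<u}\mathrm{Dom}(\delta_G^T(u'))$. $F(\mathtt{step}(\epsilon,\delta))=\{\epsilon,\delta\}$, $F(\mathtt{await}(n,\kappa))=\{\kappa\}$. A function $f$ depends on $R\subseteq\mathit{Register}$ iff there are states $\sigma,\sigma'$ with $\sigma(r)=\sigma'(r)$ for all $r\notin R$ and $f(\sigma)\neq f(\sigma')$ (for $f=\delta$: $\delta(\sigma,v)\neq\delta(\sigma',v)$ for some $v$). Step $t$ of $T$ register-reads-from to step $u$ ($t\to_{\mathrm{rrf}}u$) iff $u\ge t$ and some $f\in F(P_T(k_G^T(u)))$ depends on $\mathit{vis}_G^T(t,u)$. $\mathit{BE}(G)$ holds iff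 for all threads $T$, all $q$ with $\mathit{fail}_G^T(q)$ and all $t\in[\mathit{start}_G^T(q):\mathit{end}_G^T(q))$: $e_G^T(t)$ is not a write, and $t\to_{\mathrm{rrf}}u$ implies $u\in[\mathit{start}_G^T(q):\mathit{end}_G^T(q))$. *)

(* Defs.v *)
From mathcomp Require Import all_boot.
From Stdlib Require Import ClassicalEpsilon.

Set Implicit Arguments.
Unset Strict Implicit.
Unset Printing Implicit Defensive.

Section Syntax.
Variables (Register Value Location : finType) (Mode : Type).

Definition State := Register -> Value.
(** An update is a partial map Register -> Value; Dom(mu) = {r | mu r <> None}. *)
Definition Update := Register -> option Value.
Definition empty_update : Update := fun _ => None.

Definition upd (s : State) (mu : Update) : State :=
  fun r => match mu r with Some v => v | None => s r end.

Inductive Event :=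
  | ERead of Mode & Location
  | EWrite of Mode & Location & Value
  | EFence of Mode
  | EErr.

Definition is_read (e : Event) : bool := if e is ERead _ _ then true else false.
Definition is_write (e : Event) : bool := if e is EWrite _ _ _ then true else false.

(** Statements: step(eps, delta), with bottom encoded as None; await(n, kappa). *)
Inductive Stmt :=
  | Step of (State -> Event) & (State -> option Value -> Update)
  | Await of nat & (State -> bool).

Definition is_await (s : Stmt) : bool := if s is Await _ _ then true else false.

Definition depends {B : Type} (f : State -> B) (R : Register -> Prop) : Prop :=
  exists s s' : State, (forall r, ~ R r -> s r = s' r) /\ f s <> f s'.

Definition depends2 (d : State -> option Value -> Update) (R : Register -> Prop) : Prop :=
  exists (s s' : State) (v : option Value),
    (forall r, ~ R r -> s r = s' r) /\ d s v <> d s' v.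

Definition stmt_depends (S : Stmt) (R : Register -> Prop) : Prop :=
  match S with
  | Step eps delta => depends eps R \/ depends2 delta R
  | Await _ kappa => depends kappa R
  end.

End Syntax.

Arguments ERead {Value Location Mode}.
Arguments EWrite {Value Location Mode}.
Arguments EFence {Value Location Mode}.
Arguments EErr {Value Location Mode}.
Arguments Step {Register Value Location Mode}.
Arguments Await {Register Value Location Mode}.

Section Programs.
Variables (Register Value Location : finType) (Mode : Type) (Thread : finType).

Definition Program := Thread -> seq (Stmt Register Value Location Mode).

Definition stmt_at (P : Program) (T : Thread) (k : nat)
  : option (Stmt Register Value Location Mode) :=
  nth None (map Some (P T)) k.

Definition wf_program (P : Program) : Prop :=
  forall T k n kappa, stmt_at P T k = Some (Await n kappa) ->
    n <= k /\
    forall k', k - n <= k' < k ->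
      forall S, stmt_at P T k' = Some S -> ~~ is_await S.

(** Execution graphs: a set of triples <T,t,e> and a partial rf map. *)
Record Graph := {
  GE  : Thread -> nat -> Event Value Location Mode -> Prop;
  Grf : Thread * nat * Event Value Location Mode ->
        option (Thread * nat * Event Value Location Mode) }.

Definition graph_wf (G : Graph) : Prop :=
  forall T t e T' t' e', Grf G (T, t, e) = Some (T', t', e') ->
    is_read e /\ is_write e'.

End Programs.

Section Semantics.
Variables (Register Value Location : finType) (Mode : Type) (rlx : Mode)
          (Thread : finType).
Variables (P : Program Register Value Location Mode Thread)
          (init : Thread -> State Register Value)
          (G : Graph Value Location Mode Thread)
          (T : Thread).

Local Notation State := (State Register Value).
Local Notation Event := (Event Value Location Mode).
Local Notation Stmt := (Stmt Register Value Location Mode).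

Definition decP (A : Prop) : bool :=
  if excluded_middle_informative A then true else false.

Definition ev_of (S : Stmt) (s : State) : Event :=
  match S with Step eps _ => eps s | Await _ _ => EFence rlx end.

(** value of the write that rf assigns to <T,t,e> (None = bottom) *)
Definition rf_val (t : nat) (e : Event) : option Value :=
  if is_read e then
    match Grf G (T, t, e) with
    | Some (_, _, EWrite _ _ v) => Some v
    | _ => None
    end
  else None.

(** A configuration: (k, sigma, alive); alive = false after a read with
    value bottom (execution stops at the next step). *)
Definition Config := (nat * State * bool)%type.

Definition exec (t : nat) (c : Config) : bool :=
  let: (k, s, alive) := c in
  [&& alive, k < size (P T) & decP (exists e, GE G T t e)].

Definition next (t : nat) (c : Config) : Config :=
  let: (k, s, alive) := c in
  match stmt_at P T k with
  | Some (Step eps delta) =>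
      let e := eps s in
      let v := rf_val t e in
      if is_read e && (v == None) then (k.+1, s, false)
      else (k.+1, upd s (delta s v), true)
  | Some (Await n kappa) =>
      if kappa s then (k - n, s, true) else (k.+1, s, true)
  | None => c
  end.

Fixpoint cfg (t : nat) : option Config :=
  match t with
  | 0 => Some (0, init T, true)
  | t'.+1 => match cfg t' with
             | Some c => if exec t' c then Some (next t' c) else None
             | None => None
             end
  end.

(** step t of T is executed, i.e. t < N_G^T *)
Definition executed (t : nat) : bool :=
  if cfg t is Some c then exec t c else false.

(** k_G^T(t) and sigma_G^T(t) (defined for t <= N; defaults beyond) *)
Definition kk (t : nat) : nat := if cfg t is Some (k, _, _) then k else 0.
Definition sigma (t : nat) : State := if cfg t is Some (_, s, _) then s else init T.

Definition ev (t : nat) : Event :=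
  if stmt_at P T (kk t) is Some St then ev_of St (sigma t) else EErr.

Definition vv (t : nat) : option Value := rf_val t (ev t).

Definition await_step (t : nat) : bool :=
  executed t && (if stmt_at P T (kk t) is Some St then is_await St else false).

Definition is_end (q t : nat) : Prop :=
  await_step t /\ count await_step (iota 0 t) = q.

Definition has_end (q : nat) : Prop := exists t, is_end q t.

Definition end_ (q : nat) : nat :=
  match excluded_middle_informative (has_end q) with
  | left H => proj1_sig (constructive_indefinite_description _ H)
  | right _ => 0
  end.

Definition len (q : nat) : nat :=
  if stmt_at P T (kk (end_ q)) is Some (Await n _) then n else 0.

Definition start (q : nat) : nat := end_ q - len q.

Definition fail (q : nat) : Prop :=
  has_end q /\
  (if stmt_at P T (kk (end_ q)) is Some (Await _ kappa)
   then kappa (sigma (end_ q)) else false).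

Definition WI (q : nat) : Prop :=
  fail q /\ has_end q.+1 /\
  forall m, m <= len q -> is_read (ev (start q + m)) ->
    exists w, Grf G (T, start q + m, ev (start q + m)) = Some w /\
              Grf G (T, start q.+1 + m, ev (start q.+1 + m)) = Some w.

Definition delta_at (t : nat) : Update Register Value :=
  if executed t then
    match stmt_at P T (kk t) with
    | Some (Step _ delta) =>
        if is_read (ev t) && (vv t == None) then @empty_update Register Value
        else delta (sigma t) (vv t)
    | _ => @empty_update Register Value
    end
  else @empty_update Register Value.

Definition vis (t u : nat) (r : Register) : Prop :=
  delta_at t r <> None /\ forall u', t < u' < u -> delta_at u' r = None.

Definition rrf (t u : nat) : Prop :=
  t <= u /\ executed u /\
  (if stmt_at P T (kk u) is Some St then stmt_depends St (vis t u) else False).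

End Semantics.

Definition BE (Register Value Location : finType) (Mode : Type) (rlx : Mode)
  (Thread : finType) (P : Program Register Value Location Mode Thread)
  (init : Thread -> State Register Value)
  (G : Graph Value Location Mode Thread) : Prop :=
  forall T q, fail P init G T q ->
    forall t, start P init G T q <= t < end_ P init G T q ->
      ~~ is_write (ev rlx P init G T t) /\
      forall u, rrf rlx P init G T t u ->
        start P init G T q <= u < end_ P init G T q.

(* Main.v *)
Require Import Defs.
From mathcomp Require Import all_boot zify.
From Stdlib Require Import Lia.
From Stdlib Require Import ClassicalEpsilon FunctionalExtensionality.
Set Implicit Arguments. Unset Strict Implicit.

Section Sem.
Variables (Register Value Location : finType) (Mode : Type) (rlx : Mode)
  (Thread : finType) (P : Program Register Value Location Mode Thread)
  (init : Thread -> State Register Value)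
  (G : Graph Value Location Mode Thread) (T : Thread).

Local Notation kk := (kk P init G T).
Local Notation sigma := (sigma P init G T).
Local Notation executed := (executed P init G T).
Local Notation cfg := (cfg P init G T).
Local Notation delta_at := (delta_at rlx P init G T).
Local Notation ev := (ev rlx P init G T).
Local Notation vv := (vv rlx P init G T).

Lemma exec_cfg t : executed t -> cfg t = Some (kk t, sigma t, true) /\ kk t < size (P T).
Proof.
rewrite /executed /kk /sigma; case: (cfg t) => [[[k s] al]|] //=.
by case/and3P => -> ->.
Qed.

Lemma exec_succ t : executed t ->
  cfg t.+1 = Some (Defs.next P G T t (kk t, sigma t, true)).
Proof.
move=> H; have [Hc _] := exec_cfg H.
by rewrite /= Hc; move: H; rewrite /executed Hc => ->.
Qed.

Lemma exec_prefix t d : executed (t + d) -> executed t.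
Proof.
elim: d => [|d IH]; first by rewrite addn0.
move=> H; apply: IH.
move: H; rewrite addnS /executed /=.
case: (cfg (t + d)) => [c|] //; by case: ifP.
Qed.

Lemma exec_le t t' : t <= t' -> executed t' -> executed t.
Proof. by move=> /subnKC <-; apply: exec_prefix. Qed.

Lemma stmt_some k : k < size (P T) -> exists S, stmt_at P T k = Some S.
Proof.
move=> Hk; exists (nth (Await 0 (fun _ => false)) (P T) k).
by rewrite /stmt_at (nth_map (Await 0 (fun _ => false))).
Qed.

Lemma kk0 : kk 0 = 0. Proof. by []. Qed.

Lemma step_step t eps d : executed t -> stmt_at P T (kk t) = Some (Step eps d) ->
  kk t.+1 = (kk t).+1 /\
  forall r, sigma t.+1 r = match delta_at t r with Some v => v | None => sigma t r end.
Proof.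
move=> H HS; have Hs := exec_succ H.
rewrite /kk /sigma Hs /Defs.next HS.
rewrite /delta_at H HS /ev HS /= /vv /ev HS /=.
case: ifP => _ //=.
Qed.

Lemma step_await t n kap : executed t -> stmt_at P T (kk t) = Some (Await n kap) ->
  kk t.+1 = (if kap (sigma t) then kk t - n else (kk t).+1) /\
  sigma t.+1 = sigma t /\ forall r, delta_at t r = None.
Proof.
move=> H HS; have Hs := exec_succ H.
rewrite /kk /sigma Hs /Defs.next HS.
rewrite /delta_at H HS.
by case: ifP.
Qed.

Local Notation await_step := (await_step P init G T).
Local Notation is_end := (is_end P init G T).
Local Notation end_ := (end_ P init G T).

Lemma count_split (a : pred nat) x y :
  count a (iota 0 (x + y)) = count a (iota 0 x) + count a (iota x y).
Proof. by rewrite iotaD count_cat. Qed.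

Lemma is_end_lt q t1 t2 : is_end q t1 -> is_end q t2 -> t1 < t2 -> False.
Proof.
move=> [A1 C1] [A2 C2] Hlt.
have E : t2 = t1 + (t2 - t1) by rewrite subnKC // ltnW.
move: C2; rewrite E count_split C1.
case Hd: (t2 - t1) => [|d]; first by move: Hlt; rewrite -subn_gt0 Hd.
rewrite /= A1 /=. lia.
Qed.

Lemma end_eq q t : is_end q t -> end_ q = t.
Proof.
move=> H; rewrite /Defs.end_.
case: excluded_middle_informative => [Hh|Hn]; last by exfalso; apply: Hn; exists t.
case: (constructive_indefinite_description _ Hh) => t' Ht' /=.
case: (ltngtP t' t) => // Hc; exfalso.
  exact: (is_end_lt Ht' H Hc).
exact: (is_end_lt H Ht' Hc).
Qed.

Lemma sig_succ t r : executed t -> delta_at t r = None -> sigma t.+1 r = sigma t r.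
Proof.
move=> H Hd; have [_ Hs] := exec_cfg H.
have [S HS] := stmt_some Hs.
case: S HS => [eps d|n kap] HS.
  by have [_ ->] := step_step H HS; rewrite Hd.
by have [_ [-> _]] := step_await H HS.
Qed.

Lemma diff_upd t d r : (forall i, i < d -> executed (t + i)) ->
  sigma t r <> sigma (t + d) r ->
  exists u, t <= u < t + d /\ delta_at u r <> None /\
    forall u', u < u' < t + d -> delta_at u' r = None.
Proof.
elim: d => [|d IH] Hex Hne; first by rewrite addn0 in Hne.
have Hx : executed (t + d) by apply: Hex.
case Hd: (delta_at (t + d) r) => [v|].
  exists (t + d); split; first lia.
  split; first by rewrite Hd.
  move=> u' Hu'; lia.
have Hex' : forall i, i < d -> executed (t + i) by move=> i Hi; apply: Hex; lia.
have Hne' : sigma t r <> sigma (t + d) r by rewrite -(sig_succ Hx Hd) -addnS.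
have [u [Hu1 [Hu2 Hu3]]] := IH Hex' Hne'.
exists u; split; first lia.
split=> // u' Hu'.
case: (ltngtP u' (t + d)) => Hc.
- by apply: Hu3; lia.
- lia.
- by rewrite Hc.
Qed.

End Sem.

Lemma dep_union (Register Value : finType) (B : Type)
  (f : State Register Value -> B) (V : nat -> Register -> Prop) (L : seq nat) :
  forall sa sb, f sa <> f sb ->
  (forall r, sa r <> sb r -> exists u, u \in L /\ V u r) ->
  exists u, u \in L /\ depends f (V u).
Proof.
elim: L => [|u L IH] sa sb Hf HV.
  exfalso; apply: Hf; f_equal; apply: functional_extensionality => r.
  case: (excluded_middle_informative (sa r = sb r)) => // /HV [u []] //.
pose sc := fun r => if excluded_middle_informative (V u r) then sb r else sa r.
case: (excluded_middle_informative (f sa = f sc)) => Hac.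
  have H1 : f sc <> f sb by rewrite -Hac.
  have H2 : forall r, sc r <> sb r -> exists u0, u0 \in L /\ V u0 r.
    move=> r; rewrite /sc; case: excluded_middle_informative => // Hn /HV [u' [Hu' Hv]].
    exists u'; split => //.
    move: Hu'; rewrite inE => /orP [/eqP Eu|] //.
    by subst u'.
  have [u' [Hu' Hd]] := IH sc sb H1 H2.
  by exists u'; rewrite inE Hu' orbT.
exists u; split; first by rewrite inE eqxx.
exists sa, sc; split => // r Hr.
by rewrite /sc; case: excluded_middle_informative.
Qed.

Section Sem2.
Variables (Register Value Location : finType) (Mode : Type) (rlx : Mode)
  (Thread : finType) (P : Program Register Value Location Mode Thread)
  (init : Thread -> State Register Value)
  (G : Graph Value Location Mode Thread) (T : Thread).
Hypothesis wfP : wf_program P.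

Local Notation kk := (kk P init G T).
Local Notation sigma := (sigma P init G T).
Local Notation executed := (executed P init G T).

Lemma back te n kap : executed te -> stmt_at P T (kk te) = Some (Await n kap) ->
  forall j, j <= n -> j <= te /\ kk (te - j) = kk te - j.
Proof.
move=> Hte HS; have [HnK Hno] := wfP HS.
elim=> [|j IH] Hj; first by rewrite !subn0.
have [Hjt Hk] := IH (ltnW Hj).
case Ht: (te - j) => [|t].
  by move: Hk; rewrite Ht kk0; lia.
have Hex : executed t by apply: (@exec_le _ _ _ _ _ P init G T t te) => //; lia.
have [_ Hsz] := exec_cfg Hex.
have [S HS'] := stmt_some Hsz.
have E : te - j.+1 = t by lia.
rewrite E; split; first lia.
case: S HS' => [eps d|n' kap'] HS'.
  by have [Hs _] := step_step rlx Hex HS'; rewrite -Ht Hk in Hs; lia.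
have [Hs _] := step_await rlx Hex HS'.
rewrite -Ht Hk in Hs.
move: Hs; case: ifP => _ Hs; last by lia.
have [Hn' Hno'] := wfP HS'.
case: (ltngtP (kk t) (kk te)) => Hc.
- have Hr : kk te - n <= kk t < kk te by lia.
  by have := Hno _ Hr _ HS'.
- have Hr : kk t - n' <= kk te < kk t by lia.
  by have := Hno' _ Hr _ HS.
- rewrite Hc HS in HS'; case: HS' => En _; subst n'; lia.
Qed.

Lemma fwd te n kap : executed te -> stmt_at P T (kk te) = Some (Await n kap) ->
  kap (sigma te) ->
  forall j t', j <= n -> te.+1 + j <= t' -> executed t' ->
  kk (te.+1 + j) = kk te - n + j.
Proof.
move=> Hte HS Hkap; have [HnK Hno] := wfP HS.
have [Hs0 _] := step_await rlx Hte HS; rewrite Hkap in Hs0.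
elim=> [|j IH] t' Hj Hle Hex'; first by rewrite !addn0.
have Hle' : te.+1 + j <= t' by lia.
have Hk := IH t' (ltnW Hj) Hle' Hex'.
have Hex : executed (te.+1 + j) by apply: (@exec_le _ _ _ _ _ P init G T _ t') => //; lia.
have [_ Hsz] := exec_cfg Hex.
have [S HS'] := stmt_some Hsz.
case: S HS' => [eps d|n' kap'] HS'.
  by have [Hs _] := step_step rlx Hex HS'; rewrite addnS Hs Hk addnS.
have Hr : kk te - n <= kk (te.+1 + j) < kk te by lia.
by have := Hno _ Hr _ HS'.
Qed.
End Sem2.

Theorem lemma5 (Register Value Location : finType) (Mode : Type) (rlx : Mode)
  (Thread : finType) (P : Program Register Value Location Mode Thread)
  (init : Thread -> State Register Value)
  (G : Graph Value Location Mode Thread)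
  (T : Thread) (q m : nat) :
  wf_program P -> graph_wf G ->
  BE rlx P init G ->
  WI rlx P init G T q ->
  m <= len P init G T q ->
  let a := start P init G T q + m in
  let b := start P init G T q.+1 + m in
  [/\ ev rlx P init G T a = ev rlx P init G T b,
      vv rlx P init G T a = vv rlx P init G T b,
      kk P init G T a = kk P init G T b &
      forall r, sigma P init G T a r <> sigma P init G T b r ->
        exists u, start P init G T q <= u <= end_ P init G T q /\
                  vis rlx P init G T u b r].
Proof.
move=> wfP _ HBE [Hfail [Hhas1 Hrf]] Hm a b.
have Hfail0 := Hfail.
case: Hfail => [[t0 Ht0] Hk].
have Ete := end_eq Ht0.
set te := Defs.end_ P init G T q in Ete Hk.
have Hexe : executed P init G T te by rewrite Ete; case: Ht0 => /andP [].
set K := kk P init G T te in Hk.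
case HS: (stmt_at P T K) Hk => [[eps0 d0|n kap]|] // Hkap.
have [HnK Hno] := wfP T K n kap HS.
have Hlen : len P init G T q = n by rewrite /len -/te -/K HS.
have Hst : start P init G T q = te - n by rewrite /start Hlen.
rewrite Hlen in Hm Hrf.
have [Hnte _] := back rlx wfP Hexe HS (leqnn n).
have Hstep : forall k, K - n <= k < K -> exists eps d, stmt_at P T k = Some (Step eps d).
  move=> k Hk.
  have [_ Hsz] := exec_cfg Hexe.
  have [S HS'] := stmt_some (ltn_trans (proj2 (andP Hk)) Hsz : k < size (P T)).
  case: S HS' => [eps d|n' kap'] HS'; first by exists eps, d.
  by have := Hno _ Hk _ HS'.
have [t1 Ht1] := Hhas1.
have Ht1a : await_step P init G T t1 by case: Ht1.
have Ht1ex : executed P init G T t1 by move: Ht1a => /andP [].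
have Hcnt : forall x, x <= te -> count (await_step P init G T) (iota 0 x) <= q.
  move=> x Hx; case: Ht0 => _ <-; rewrite -Ete.
  by rewrite -(subnKC Hx) count_split leq_addr.
have Hlt1 : te < t1.
  rewrite ltnNge; apply/negP => Hle.
  have := Hcnt _ Hle; case: Ht1 => _ ->; lia.
have Hge1 : te.+1 + n <= t1.
  rewrite leqNgt; apply/negP => Hlt.
  have Hk1 := fwd rlx wfP Hexe HS Hkap (j := t1 - te.+1) (t' := t1) ltac:(lia) ltac:(lia) Ht1ex.
  have E1 : te.+1 + (t1 - te.+1) = t1 by lia.
  rewrite E1 in Hk1.
  have [eps [d Hsd]] := Hstep (kk P init G T t1) ltac:(lia).
  by move: Ht1a; rewrite /await_step Hsd andbF.
have Hexb : forall j, j <= n -> executed P init G T (te.+1 + j).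
  by move=> j Hj; apply: (exec_le (t' := t1)) => //; lia.
have Hkb : forall j, j <= n -> kk P init G T (te.+1 + j) = K - n + j.
  by move=> j Hj; apply: (fwd rlx wfP Hexe HS Hkap (t' := t1)) => //; lia.
have Hexa : forall j, j <= n -> executed P init G T (te - n + j).
  by move=> j Hj; apply: (exec_le (t' := te)) => //; lia.
have Hka : forall j, j <= n -> kk P init G T (te - n + j) = K - n + j.
  move=> j Hj; have [_ H] := back rlx wfP Hexe HS (j := n - j) ltac:(lia).
  have E : te - (n - j) = te - n + j by lia.
  by rewrite -E H; lia.
have Hend1 : is_end P init G T q.+1 (te.+1 + n).
  split.
    by rewrite /await_step Hexb // Hkb // subnK // HS.
  have -> : te.+1 + n = te + n.+1 by lia.
  rewrite count_split; case: Ht0 => Ha0 Hc0.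
  rewrite Ete Hc0 /= Ha0 -Ete add1n.
  rewrite addnS; congr (_.+1); apply/eqP; rewrite -[X in _ == X]addn0 eqn_add2l.
  rewrite -leqn0 leqNgt -has_count; apply/hasPn => x.
  rewrite mem_iota => Hx.
  rewrite /await_step; case Hxe: (executed P init G T x) => //=.
  have E : x = te.+1 + (x - te.+1) by lia.
  rewrite E Hkb; last by lia.
  have [eps [d ->]] := Hstep (K - n + (x - te.+1)) ltac:(lia).
  by [].
have Ete1 := end_eq Hend1.
have Hst1 : start P init G T q.+1 = te.+1.
  rewrite /start /len Ete1 Hkb // subnK // HS; lia.
rewrite Hst in Hrf.
rewrite Hst1 in Hrf.
rewrite /a /b Hst Hst1 -/te.
have noDep : forall j St, j <= n ->
    stmt_at P T (kk P init G T (te.+1 + j)) = Some St ->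
    forall u, u \in iota (te - n) n ->
    ~ stmt_depends St (vis rlx P init G T u (te.+1 + j)).
  move=> j St Hj HSt u; rewrite mem_iota => Hu Hd.
  have Hr : rrf rlx P init G T u (te.+1 + j).
    split; first lia.
    by split; [exact: Hexb | rewrite HSt].
  have Hu' : start P init G T q <= u < Defs.end_ P init G T q by rewrite Hst -/te; lia.
  have [_ H] := HBE T q Hfail0 u Hu'.
  by have := H _ Hr; rewrite Hst -/te; lia.
have Same : forall j, j <= n ->
    (forall r, sigma P init G T (te - n + j) r <> sigma P init G T (te.+1 + j) r ->
       exists u, u \in iota (te - n) n /\ vis rlx P init G T u (te.+1 + j) r) ->
    ev rlx P init G T (te - n + j) = ev rlx P init G T (te.+1 + j) /\
    (forall eps d, stmt_at P T (K - n + j) = Some (Step eps d) ->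
       forall v, d (sigma P init G T (te - n + j)) v = d (sigma P init G T (te.+1 + j)) v).
  move=> j Hj HC.
  have [_ Hsz] := exec_cfg (Hexb j Hj).
  have [St HSt] := stmt_some Hsz.
  have HSt' := HSt; rewrite Hkb // in HSt'.
  split.
    rewrite /ev Hka // Hkb // HSt'.
    case: St HSt HSt' => [eps d|n' kap'] HSt HSt' //=.
    case: (excluded_middle_informative (eps (sigma P init G T (te - n + j)) = eps (sigma P init G T (te.+1 + j)))) => // Hne.
    have [u [Hu Hdep]] := dep_union Hne HC.
    by exfalso; apply: (noDep j _ Hj HSt u Hu); left.
  move=> eps d HS2 v.
  case: (excluded_middle_informative (d (sigma P init G T (te - n + j)) v = d (sigma P init G T (te.+1 + j)) v)) => // Hne.
  have [u [Hu [s1 [s2 [H1 H2]]]]] := dep_union (f := fun s => d s v) Hne HC.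
  rewrite HSt' in HS2; case: HS2 => ES; subst St.
  exfalso; apply: (noDep j _ Hj HSt u Hu).
  by right; exists s1, s2, v.
have Vv : forall j, j <= n ->
    ev rlx P init G T (te - n + j) = ev rlx P init G T (te.+1 + j) ->
    vv rlx P init G T (te - n + j) = vv rlx P init G T (te.+1 + j).
  move=> j Hj He; rewrite /vv /rf_val -He.
  case Hr: (is_read _) => //.
  have [w [H1 H2]] := Hrf j Hj Hr.
  by rewrite -He in H2; rewrite H1 H2.
have C : forall j, j <= n ->
    forall r, sigma P init G T (te - n + j) r <> sigma P init G T (te.+1 + j) r ->
       exists u, u \in iota (te - n) n /\ vis rlx P init G T u (te.+1 + j) r.
  elim=> [|j IH] Hj r Hne.
    have [_ [Hse Hde]] := step_await rlx Hexe HS.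
    rewrite !addn0 Hse in Hne.
    have Hne' : sigma P init G T (te - n) r <> sigma P init G T (te - n + n) r by rewrite subnK.
    have Hex' : forall i, i < n -> executed P init G T (te - n + i).
      by move=> i Hi; apply: Hexa; lia.
    have [u [Hu1 [Hu2 Hu3]]] := diff_upd rlx Hex' Hne'.
    exists u; split; first by rewrite mem_iota; lia.
    split => // u' Hu'.
    case: (ltngtP u' te) => Hc.
    - by apply: Hu3; lia.
    - lia.
    - by rewrite Hc.
  have Hj' : j <= n by lia.
  have [eps [d HSd]] := Hstep (K - n + j) ltac:(lia).
  have [Hev Hd] := Same j Hj' (IH Hj').
  have Hvv := Vv j Hj' Hev.
  have HSa : stmt_at P T (kk P init G T (te - n + j)) = Some (Step eps d) by rewrite Hka.
  have HSb : stmt_at P T (kk P init G T (te.+1 + j)) = Some (Step eps d) by rewrite Hkb.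
  have Hdel : delta_at rlx P init G T (te - n + j) = delta_at rlx P init G T (te.+1 + j).
    rewrite /delta_at Hexa // Hexb // HSa HSb Hev Hvv (Hd _ _ HSd) //.
  have [_ Sa] := step_step rlx (Hexa j Hj') HSa.
  have [_ Sb] := step_step rlx (Hexb j Hj') HSb.
  rewrite !addnS Sa Sb Hdel in Hne.
  case Hdr: (delta_at rlx P init G T (te.+1 + j) r) Hne => [v|] Hne //.
  have [u [Hu [Hv1 Hv2]]] := IH Hj' r Hne.
  exists u; split => //; rewrite addnS; split => // u' Hu'.
  case: (ltngtP u' (te.+1 + j)) => Hc.
  - by apply: Hv2; lia.
  - lia.
  - by rewrite Hc.
have [Hev Hd] := Same m Hm (C m Hm).
split.
- exact: Hev.
- exact: Vv.
- by rewrite Hka // Hkb.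
- move=> r /(C m Hm) [u [Hu Hv]]; exists u; split => //.
  by move: Hu; rewrite mem_iota; lia.
Qed.
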